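(* Let $\mathcal{C}$ be a category with pushouts and pullbacks, equipped with a costable factorisation system $(\mathcal{E},\mathcal{M})$. Let $\mathcal{A}$ be a subcategory of $\mathcal{C}$ containing all isomorphisms and stable under pullback. Suppose that for every cospan $X\xrightarrow{f}A\xleftarrow{g}Y$ in $\mathcal{A}$, with pullback span $X\leftarrow P\rightarrow Y$ (in $\mathcal{C}$) and pushout $X\to Q\leftarrow Y$ of that span (in $\mathcal{C}$), the unique induced morphism $Q\to A$ lies in $\mathcal{M}$. Then mapping a span $X\xleftarrow{f}N\xrightarrow{g}Y$ with $f,g\in\mathcal{A}$ to the corelation represented by its pushout cospan in $\mathcal{C}$ defines an identity-on-objects functor $\Pi\colon \mathrm{Span}(\mathcal{A}) \to \mathrm{Corel}(\mathcal{C})$.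
   Context: Composition is written diagrammatically ($f;g$ means first $f$, then $g$). A factorisation system $(\mathcal{E},\mathcal{M})$ on $\mathcal{C}$: subcategories containing all isomorphisms such that every morphism factors as $e;m$ with $e\in\mathcal{E}$, $m\in\mathcal{M}$, with the unique diagonal fill-in property (given $f=e;m$, $f'=e';m'$ and $u,v$ with $f;v=u;f'$, there is a unique $s$ with $e;s=u;e'$, $m;v=s;m'$). Costable: $\mathcal{M}$ is stable under pushout (in a pushout square, if a morphism out of the apex is in $\mathcal{M}$, so is the opposite side). $\mathcal{A}$ stable under pullback: in a pullback square in $\mathcal{C}$, if a morphism into the corner lies in $\mathcal{A}$ then so does the opposite side. $\mathrm{Span}(\mathcal{C})$ has the objects of $\mathcal{C}$ and morphisms isomorphism classes of spans, composed by pullback; $\mathrm{Span}(\mathcal{A})$ is its subcategory of spans both of whose legs lie in $\mathcal{A}$. $\mathrm{Corel}(\mathcal{C})$ has the objects of $\mathcal{C}$ and morphisms $X\to Y$ the equivalence classes of cospans $X\xrightarrow{f}N\xleftarrow{g}Y$ under the equivalence relation generated by relating it to $X\xrightarrow{f'}N'\xleftarrow{g'}Y$ whenever there is $m\colon N\to N'$ in $\mathcal{M}$ with $f;m=f'$, $g;m=g'$; composition by pushout of representatives. *)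

(* Defs.v *)
From Stdlib Require Import Relations.Relation_Operators.

Set Implicit Arguments.
Unset Strict Implicit.

(* A category; composition is diagrammatic: comp f g = "f ; g" (first f, then g). *)
Record Category := {
  Ob :> Type;
  Hom : Ob -> Ob -> Type;
  idm : forall X, Hom X X;
  comp : forall X Y Z, Hom X Y -> Hom Y Z -> Hom X Z;
  comp_idl : forall X Y (f : Hom X Y), comp (idm X) f = f;
  comp_idr : forall X Y (f : Hom X Y), comp f (idm Y) = f;
  comp_assoc : forall W X Y Z (f : Hom W X) (g : Hom X Y) (h : Hom Y Z),
      comp (comp f g) h = comp f (comp g h)
}.

Arguments Hom : clear implicits.
Arguments idm {c} X.
Arguments comp {c X Y Z} f g.
Notation "f ;; g" := (comp f g) (at level 40, left associativity).

Section Defs.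
Variable C : Category.

Definition MorClass := forall X Y : C, Hom C X Y -> Prop.

Definition is_iso (X Y : C) (f : Hom C X Y) : Prop :=
  exists g : Hom C Y X, f ;; g = idm X /\ g ;; f = idm Y.

Definition subcat_with_isos (P : MorClass) : Prop :=
  (forall X Y (f : Hom C X Y), is_iso f -> P X Y f) /\
  (forall X Y Z (f : Hom C X Y) (g : Hom C Y Z), P X Y f -> P Y Z g -> P X Z (f ;; g)).

Definition is_pushout (X A B Q : C) (f : Hom C X A) (g : Hom C X B)
    (i : Hom C A Q) (j : Hom C B Q) : Prop :=
  f ;; i = g ;; j /\
  forall (Z : C) (u : Hom C A Z) (v : Hom C B Z), f ;; u = g ;; v ->
    exists! h : Hom C Q Z, i ;; h = u /\ j ;; h = v.

Definition is_pullback (A B X P : C) (f : Hom C A X) (g : Hom C B X)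
    (p : Hom C P A) (q : Hom C P B) : Prop :=
  p ;; f = q ;; g /\
  forall (Z : C) (u : Hom C Z A) (v : Hom C Z B), u ;; f = v ;; g ->
    exists! h : Hom C Z P, h ;; p = u /\ h ;; q = v.

Definition has_pushouts : Prop :=
  forall (X A B : C) (f : Hom C X A) (g : Hom C X B),
    exists (Q : C) (i : Hom C A Q) (j : Hom C B Q), is_pushout f g i j.

Definition has_pullbacks : Prop :=
  forall (A B X : C) (f : Hom C A X) (g : Hom C B X),
    exists (P : C) (p : Hom C P A) (q : Hom C P B), is_pullback f g p q.

Definition factorisation_system (E M : MorClass) : Prop :=
  subcat_with_isos E /\ subcat_with_isos M /\
  (forall X Y (f : Hom C X Y), exists (N : C) (e : Hom C X N) (m : Hom C N Y),
      E X N e /\ M N Y m /\ f = e ;; m) /\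
  (forall X Y X' Y' N N' (f : Hom C X Y) (f' : Hom C X' Y')
      (e : Hom C X N) (m : Hom C N Y) (e' : Hom C X' N') (m' : Hom C N' Y')
      (u : Hom C X X') (v : Hom C Y Y'),
      E X N e -> M N Y m -> E X' N' e' -> M N' Y' m' ->
      f = e ;; m -> f' = e' ;; m' -> f ;; v = u ;; f' ->
      exists! s : Hom C N N', e ;; s = u ;; e' /\ m ;; v = s ;; m').

(* M stable under pushout: in a pushout square, if a morphism out of the apex
   (here f) is in M then so is the opposite side (here j). The other case is
   the same statement applied to the transposed square. *)
Definition stable_under_pushout (M : MorClass) : Prop :=
  forall (X A B Q : C) (f : Hom C X A) (g : Hom C X B) (i : Hom C A Q) (j : Hom C B Q),
    is_pushout f g i j -> M X A f -> M B Q j.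

Definition stable_under_pullback (A : MorClass) : Prop :=
  forall (Y Z X P : C) (f : Hom C Y X) (g : Hom C Z X) (p : Hom C P Y) (q : Hom C P Z),
    is_pullback f g p q -> A Z X g -> A P Y p.

Record Span (X Y : C) := { sapex : C; sl : Hom C sapex X; sr : Hom C sapex Y }.
Record Cospan (X Y : C) := { capex : C; cl : Hom C X capex; cr : Hom C Y capex }.

Definition id_span (X : C) : Span X X := {| sapex := X; sl := idm X; sr := idm X |}.
Definition id_cospan (X : C) : Cospan X X := {| capex := X; cl := idm X; cr := idm X |}.

Definition span_in (A : MorClass) (X Y : C) (s : Span X Y) : Prop :=
  A _ _ (sl s) /\ A _ _ (sr s).

(* isomorphism of spans (morphisms of Span(C) are iso classes of spans) *)
Definition span_iso (X Y : C) (s s' : Span X Y) : Prop :=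
  exists h : Hom C (sapex s) (sapex s'), is_iso h /\ h ;; sl s' = sl s /\ h ;; sr s' = sr s.

Definition is_span_composite (X Y Z : C) (s1 : Span X Y) (s2 : Span Y Z) (s : Span X Z) : Prop :=
  exists (p : Hom C (sapex s) (sapex s1)) (q : Hom C (sapex s) (sapex s2)),
    is_pullback (sr s1) (sl s2) p q /\ sl s = p ;; sl s1 /\ sr s = q ;; sr s2.

Definition is_cospan_composite (X Y Z : C) (c1 : Cospan X Y) (c2 : Cospan Y Z) (c : Cospan X Z) : Prop :=
  exists (i : Hom C (capex c1) (capex c)) (j : Hom C (capex c2) (capex c)),
    is_pushout (cr c1) (cl c2) i j /\ cl c = cl c1 ;; i /\ cr c = cr c2 ;; j.

Definition pushout_cospan_of (X Y : C) (s : Span X Y) (c : Cospan X Y) : Prop :=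
  is_pushout (sl s) (sr s) (cl c) (cr c).

Definition corel_step (M : MorClass) (X Y : C) (c c' : Cospan X Y) : Prop :=
  exists m : Hom C (capex c) (capex c'), M _ _ m /\ cl c ;; m = cl c' /\ cr c ;; m = cr c'.

(* equality of morphisms of Corel(C): the equivalence relation generated *)
Definition corel_eq (M : MorClass) (X Y : C) : Cospan X Y -> Cospan X Y -> Prop :=
  clos_refl_sym_trans (Cospan X Y) (@corel_step M X Y).

End Defs.

(* Main.v *)
Require Import Defs.
From Stdlib Require Import Relations.Relation_Operators.

Section H.
Context {C : Category}.

Lemma aeq (X Y Y' Z W : C) (f : Hom C X Y) (g : Hom C Y Z) (f' : Hom C X Y') (g' : Hom C Y' Z)
  (h : Hom C Z W) : f ;; g = f' ;; g' -> f ;; (g ;; h) = f' ;; (g' ;; h).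
Proof. intro H. rewrite <- !comp_assoc, H. reflexivity. Qed.

Lemma po_uniq (X A B Q T : C) (f : Hom C X A) (g : Hom C X B) (i : Hom C A Q) (j : Hom C B Q)
  (h1 h2 : Hom C Q T) : is_pushout f g i j -> i ;; h1 = i ;; h2 -> j ;; h1 = j ;; h2 -> h1 = h2.
Proof.
  intros [Hc Hu] E1 E2.
  destruct (Hu T (i ;; h1) (j ;; h1)) as [h [_ Hh]].
  { rewrite <- !comp_assoc, Hc. reflexivity. }
  transitivity h; [symmetry|]; apply Hh; split; auto.
Qed.

Lemma po_ex (X A B Q : C) (f : Hom C X A) (g : Hom C X B) (i : Hom C A Q) (j : Hom C B Q) :
  is_pushout f g i j -> forall T (u : Hom C A T) (v : Hom C B T), f ;; u = g ;; v ->
  exists h, i ;; h = u /\ j ;; h = v.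
Proof. intros [Hc Hu] T u v E. destruct (Hu T u v E) as [h [Hh _]]. eauto. Qed.
End H.
Arguments po_ex {C X A B Q f g i j} _ T u v _.
Arguments po_uniq {C X A B Q T f g i j h1 h2} _ _ _.
Arguments aeq {C X Y Y' Z W f g f' g'} h _.

Theorem proposition2p9 (C : Category) (E M A : MorClass C) :
  has_pushouts C -> has_pullbacks C ->
  factorisation_system E M -> stable_under_pushout M ->
  subcat_with_isos A -> stable_under_pullback A ->
  (forall (X Y Z P Q : C) (f : Hom C X Z) (g : Hom C Y Z)
      (p : Hom C P X) (q : Hom C P Y) (i : Hom C X Q) (j : Hom C Y Q) (h : Hom C Q Z),
      A _ _ f -> A _ _ g -> is_pullback f g p q -> is_pushout p q i j ->
      i ;; h = f -> j ;; h = g -> M _ _ h) ->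
  (* well defined on morphisms of Span(A) (iso classes), independently of the chosen pushout *)
  (forall (X Y : C) (s s' : Span X Y) (c c' : Cospan X Y),
      span_in A s -> span_in A s' -> span_iso s s' ->
      pushout_cospan_of s c -> pushout_cospan_of s' c' -> corel_eq M c c') /\
  (* preserves identities *)
  (forall (X : C) (c : Cospan X X),
      pushout_cospan_of (id_span X) c -> corel_eq M c (id_cospan X)) /\
  (* preserves composition *)
  (forall (X Y Z : C) (s1 : Span X Y) (s2 : Span Y Z) (s : Span X Z)
      (c1 : Cospan X Y) (c2 : Cospan Y Z) (c12 c : Cospan X Z),
      span_in A s1 -> span_in A s2 -> is_span_composite s1 s2 s ->
      pushout_cospan_of s1 c1 -> pushout_cospan_of s2 c2 ->
      is_cospan_composite c1 c2 c12 -> pushout_cospan_of s c ->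
      corel_eq M c12 c).
Proof.
  intros Hpo Hpb Hfs Hst HA HAst Hkey.
  destruct Hfs as [_ [[HMiso _] _]].
  split; [|split].
  - intros X Y [N f g] [N' f' g'] [K k1 k2] [K' k1' k2'] _ _ [h [[hi [Hhi1 Hhi2]] [Hl Hr]]] Hc Hc'.
    unfold pushout_cospan_of in *; simpl in *.
    destruct (po_ex Hc _ (k1') (k2')) as [m [Hm1 Hm2]].
    { rewrite <- Hl, <- Hr, !comp_assoc. rewrite (proj1 Hc'); reflexivity. }
    destruct (po_ex Hc' _ k1 k2) as [n [Hn1 Hn2]].
    { assert (E1 : f' = hi ;; f) by (rewrite <- Hl, <- comp_assoc, Hhi2, comp_idl; reflexivity).
      assert (E2 : g' = hi ;; g) by (rewrite <- Hr, <- comp_assoc, Hhi2, comp_idl; reflexivity).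
      rewrite E1, E2, !comp_assoc. rewrite (proj1 Hc); reflexivity. }
    apply rst_step. exists m. split; [|auto].
    apply HMiso. exists n. simpl. split.
    + apply (po_uniq Hc).
      * rewrite <- comp_assoc, Hm1, Hn1, comp_idr; reflexivity.
      * rewrite <- comp_assoc, Hm2, Hn2, comp_idr; reflexivity.
    + apply (po_uniq Hc').
      * rewrite <- comp_assoc, Hn1, Hm1, comp_idr; reflexivity.
      * rewrite <- comp_assoc, Hn2, Hm2, comp_idr; reflexivity.
  - intros X [K k1 k2] Hc. unfold pushout_cospan_of in *; simpl in *.
    assert (Ek : k1 = k2) by (destruct Hc as [Hc _]; rewrite !comp_idl in Hc; exact Hc).
    subst k2.
    destruct (po_ex Hc _ (idm X) (idm X)) as [n [Hn _]]; [reflexivity|].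
    apply rst_sym, rst_step. exists k1. simpl. rewrite comp_idl. split; [|auto].
    apply HMiso. exists n. split; auto.
    apply (po_uniq Hc); rewrite <- comp_assoc, Hn, comp_idl, comp_idr; reflexivity.
  - intros X Y Z [N1 f1 g1] [N2 f2 g2] [P sl0 sr0] [Q1 i1 j1] [Q2 i2 j2] [Q c1l c2r] [R a b]
      [HA1 HA2] [HA3 HA4] [p [q [Hpb0 [El Er]]]] HQ1 HQ2 [k1 [k2 [HQ [Ecl Ecr]]]] HR.
    unfold pushout_cospan_of in *; simpl in *. subst sl0 sr0 c1l c2r.
    destruct (Hpo _ _ _ p q) as [W [u [v HW]]].
    destruct (po_ex HW _ (g1) (f2)) as [h [Hh1 Hh2]]; [apply Hpb0|].
    assert (HMh : M _ _ h) by exact (Hkey _ _ _ _ _ g1 f2 p q u v h HA2 HA3 Hpb0 HW Hh1 Hh2).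
    destruct (po_ex HW _ (f1 ;; a) (g2 ;; b)) as [w [Hw1 Hw2]].
    { rewrite <- !comp_assoc. apply HR. }
    destruct (po_ex HR _ (i1 ;; k1) (j2 ;; k2)) as [m [Hm1 Hm2]].
    { rewrite !comp_assoc. rewrite (aeq k1 (proj1 HQ1)).
      rewrite <- (comp_assoc p g1), (proj1 Hpb0), comp_assoc.
      rewrite (proj1 HQ), (aeq k2 (proj1 HQ2)). reflexivity. }
    assert (Hsq : h ;; (j1 ;; k1) = w ;; m).
    { apply (po_uniq HW).
      - rewrite <- !comp_assoc, Hh1, Hw1, (comp_assoc f1 a m), Hm1.
        rewrite <- !comp_assoc, (proj1 HQ1). reflexivity.
      - rewrite <- !comp_assoc, Hh2, Hw2, (comp_assoc g2 b m), Hm2.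
        rewrite (comp_assoc f2 j1 k1), (proj1 HQ).
        rewrite <- !comp_assoc, (proj1 HQ2). reflexivity. }
    assert (Hpush : is_pushout h w (j1 ;; k1) m).
    { split; [exact Hsq|].
      intros T y r Hyr.
      destruct (po_ex HQ1 _ (a ;; r) (y)) as [z1 [Hz1a Hz1b]].
      { rewrite <- comp_assoc, <- Hw1, comp_assoc, <- Hyr, <- comp_assoc, Hh1. reflexivity. }
      destruct (po_ex HQ2 _ (y) (b ;; r)) as [z2 [Hz2a Hz2b]].
      { rewrite <- comp_assoc, <- Hw2, comp_assoc, <- Hyr, <- comp_assoc, Hh2. reflexivity. }
      destruct (po_ex HQ _ (z1) (z2)) as [z [Hza Hzb]].
      { rewrite Hz1b, Hz2a. reflexivity. }
      exists z. split; [split|].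
      - rewrite comp_assoc, Hza. exact Hz1b.
      - apply (po_uniq HR).
        + rewrite <- comp_assoc, Hm1, comp_assoc, Hza. exact Hz1a.
        + rewrite <- comp_assoc, Hm2, comp_assoc, Hzb. exact Hz2b.
      - intros z' [Hz'1 Hz'2].
        apply (po_uniq HQ).
        + rewrite Hza. apply (po_uniq HQ1).
          * rewrite Hz1a, <- comp_assoc, <- Hm1, comp_assoc, Hz'2. reflexivity.
          * rewrite Hz1b, <- Hz'1, ?comp_assoc; reflexivity.
        + rewrite Hzb. apply (po_uniq HQ2).
          * rewrite Hz2a, <- Hz'1, comp_assoc; exact (aeq z' (proj1 HQ)).
          * rewrite Hz2b, <- comp_assoc, <- Hm2, comp_assoc, Hz'2. reflexivity. }
    apply rst_sym, rst_step. exists m. simpl. split; [|auto].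
    exact (Hst _ _ _ _ _ _ _ _ Hpush HMh).
Qed.
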